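(* Let $\varepsilon>0$ and let $\mathcal{P}$ be any bounded-derivative property of functions $f:[n]\to\mathbb{R}$. There is a distribution-free tester for $\mathcal{P}$ with proximity parameter $\varepsilon$ making $24\,\varepsilon^{-1}\log n$ queries.
   Context: A bounded-derivative property on $[n]$ is $\mathcal{P}=\{g:[n]\to\mathbb{R}: l(t)\le g(t+1)-g(t)\le u(t)\ \forall t\in[n-1]\}$ for some $l,u:[n-1]\to\mathbb{R}$ with $l(t)<u(t)$. A distribution-free tester does not know the distribution $\mathcal{D}$ on $[n]$ but may draw independent samples from it and query $f$ anywhere; for every $\mathcal{D}$ it must accept with probability $>2/3$ if $f\in\mathcal{P}$ and reject with probability $>2/3$ if $\min_{g\in\mathcal{P}}\Pr_{x\sim\mathcal{D}}[f(x)\ne g(x)]>\varepsilon$. *)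

(* Defs.v *)
From HB Require Import structures.
From mathcomp Require Import all_boot all_order all_algebra.
From mathcomp Require Import reals exp.
Set Implicit Arguments. Unset Strict Implicit. Unset Printing Implicit Defensive.
Import Order.TTheory GRing.Theory Num.Theory.
Local Open Scope ring_scope.

(* Domain [n] = {1,...,n} is represented 0-based by 'I_n.  The derivative
   bounds l, u are indexed 0-based too: l t, u t bound g(t+1) - g(t). *)

Definition bounded_derivative (R : realType) (n : nat) (l u : nat -> R)
    (g : 'I_n -> R) : Prop :=
  forall i j : 'I_n, nat_of_ord j = (nat_of_ord i).+1 ->
    l i <= g j - g i <= u i.

(* A randomized adaptive algorithm with oracle access to f : [n] -> R and
   sample access to an unknown distribution D on [n], as a decision tree:
   - Leaf b    : stop, accept iff b;
   - Sample k  : draw x ~ D, observe x and f x, continue with k x (f x);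
   - Query x k : query f at x, continue with k (f x);
   - Coin k    : flip a fair internal coin b, continue with k b. *)
Inductive tester (R : realType) (n : nat) : Type :=
| Leaf of bool
| Sample of ('I_n -> R -> tester R n)
| Query of 'I_n & (R -> tester R n)
| Coin of (bool -> tester R n).

Fixpoint acc_prob (R : realType) (n : nat) (T : tester R n)
    (f : 'I_n -> R) (p : 'I_n -> R) : R :=
  match T with
  | Leaf b => if b then 1 else 0
  | Sample k => \sum_(x < n) p x * acc_prob (k x (f x)) f p
  | Query x k => acc_prob (k (f x)) f p
  | Coin k => (acc_prob (k true) f p + acc_prob (k false) f p) / 2
  end.

Fixpoint queries_le (R : realType) (n : nat) (T : tester R n) (q : nat) : Prop :=
  match T with
  | Leaf _ => True
  | Sample k => match q with 0 => False | q'.+1 => forall x y, queries_le (k x y) q' end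
  | Query _ k => match q with 0 => False | q'.+1 => forall y, queries_le (k y) q' end
  | Coin k => forall b, queries_le (k b) q
  end.

Definition is_distribution (R : realType) (n : nat) (p : 'I_n -> R) : Prop :=
  (forall x, 0 <= p x) /\ \sum_(x < n) p x = 1.

Definition dist_D (R : realType) (n : nat) (p f g : 'I_n -> R) : R :=
  \sum_(x < n | f x != g x) p x.

Definition df_tester (R : realType) (n : nat) (P : ('I_n -> R) -> Prop)
    (eps : R) (T : tester R n) : Prop :=
  forall (p : 'I_n -> R), is_distribution p ->
  forall f : 'I_n -> R,
    (P f -> acc_prob T f p > 2/3) /\
    ((forall g, P g -> dist_D p f g > eps) -> 1 - acc_prob T f p > 2/3).

(* Main.v *)
Require Import Defs.
From HB Require Import structures.
From mathcomp Require Import all_boot all_order all_algebra.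
From mathcomp Require Import reals exp.
From mathcomp Require Import lra zify.
Import Order.TTheory GRing.Theory Num.Theory.
Local Open Scope ring_scope.
Set Implicit Arguments. Unset Strict Implicit.

Fixpoint bpath (k a b x : nat) : seq nat :=
  match k with
  | 0 => [::]
  | k.+1 => if (b <= a.+1)%N then [::] else
      let m := ((a + b)./2)%N in
      m :: (if (x < m)%N then bpath k a m x else bpath k m b x)
  end.

Lemma half_bnd a b : (a.+1 < b)%N -> (a < (a + b)./2 < b)%N.
Proof. move=> h. have := half_leq. lia. Qed.

Lemma bpath_in k a b x z : z \in bpath k a b x -> (a < z < b)%N.
Proof.
elim: k a b => [|k IH] a b //=.
case: ifP => // hb; rewrite inE => /orP [/eqP ->|].
  by apply: half_bnd; lia.
have := half_bnd (a:=a) (b:=b).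
case: ifP => _ + /IH; lia.
Qed.

Lemma bpath_size k a b x : (a < b)%N ->
  (2 ^ size (bpath k a b x) <= maxn 1 ((b - a).-1.*2))%N.
Proof.
elim: k a b => [|k IH] a b hab; first by rewrite /= leq_maxl.
rewrite [bpath _ _ _ _]/=.
case: ifP => hb; first by rewrite leq_maxl.
rewrite [size _]/=.
have hm := half_bnd (a:=a) (b:=b).
rewrite expnS.
case: ifP => _.
  have := IH a ((a + b)./2)%N; lia.
have := IH ((a + b)./2)%N b; lia.
Qed.

Lemma bpath_lca k a b x y : (b - a <= k)%N -> (a <= x)%N -> (x <= y)%N -> (y < b)%N ->
  x = y \/ exists2 z, (z \in bpath k a b x) && (z \in bpath k a b y) & (x <= z <= y)%N.
Proof.
elim: k a b => [|k IH] a b hk hx hxy hy; first by lia.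
rewrite /=; case: ifP => hb; first by left; lia.
have hm := half_bnd (a:=a) (b:=b).
case: (ltnP y ((a+b)./2)) => hy2.
  have hx2 : (x < (a + b)./2)%N by lia.
  rewrite ?hx2 ?hy2.
  case: (IH a ((a+b)./2)%N ltac:(lia) hx hxy hy2); first by left.
  by move=> [z /andP [h1 h2] h3]; right; exists z => //; rewrite !inE h1 h2 !orbT.
case: (ltnP x ((a+b)./2)) => hx2.
  by right; exists ((a+b)./2)%N; rewrite ?inE ?eqxx //; lia.
rewrite ?(_ : (x < (a+b)./2)%N = false) ?(_ : (y < (a+b)./2)%N = false); try lia.
case: (IH ((a+b)./2)%N b ltac:(lia) hx2 hxy hy); first by left.
by move=> [z /andP [h1 h2] h3]; right; exists z => //; rewrite !inE h1 h2 !orbT.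
Qed.

Section Main.
Variables (R : realType) (n : nat) (l u : nat -> R).
Hypothesis hlu : forall t : nat, (t.+1 < n.+1)%N -> l t < u t.

Definition Ls a b : R := \sum_(a <= t < b) l t.
Definition Us a b : R := \sum_(a <= t < b) u t.
Definition consv (x : nat) (fx : R) (z : nat) (fz : R) : bool :=
  if (x <= z)%N then (Ls x z <= fz - fx <= Us x z)
  else (Ls z x <= fx - fz <= Us z x).

Lemma consv_refl x fx : consv x fx x fx.
Proof. by rewrite /consv leqnn /Ls /Us !big_geq // subrr lexx. Qed.

Lemma consv_sym x fx z fz : consv x fx z fz = consv z fz x fx.
Proof.
rewrite /consv; case: (ltngtP x z) => h //.
move: fx fz; rewrite h => fx fz.
rewrite /Ls /Us !big_geq //.
apply/idP/idP => /andP [h1 h2]; apply/andP; split; lra.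
Qed.

Lemma LsD a b c : (a <= b <= c)%N -> Ls a c = Ls a b + Ls b c.
Proof. by move=> h; rewrite /Ls -big_cat_nat //; case/andP: h. Qed.
Lemma UsD a b c : (a <= b <= c)%N -> Us a c = Us a b + Us b c.
Proof. by move=> h; rewrite /Us -big_cat_nat //; case/andP: h. Qed.

Lemma consv_trans x fx z fz y fy : (x <= z <= y)%N ->
  consv x fx z fz -> consv z fz y fy -> consv x fx y fy.
Proof.
move=> /andP [h1 h2]; rewrite /consv h1 h2 (leq_trans h1 h2).
have hz : (x <= z <= y)%N by rewrite h1 h2.
rewrite (LsD hz) (UsD hz).
move=> /andP [a1 a2] /andP [b1 b2]; apply/andP; split; lra.
Qed.


Local Notation N := n.+1.

Lemma bd_seg (f : 'I_N -> R) : bounded_derivative l u f ->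
  forall a b, (a <= b <= n)%N ->
  Ls a b <= f (inord b) - f (inord a) <= Us a b.
Proof.
move=> hf a; elim=> [|b IH] /andP [hab hbn].
  have -> : a = 0%N by lia.
  by rewrite /Ls /Us !big_geq // subrr lexx.
case: (ltngtP a b.+1) => h; [|lia|]; last first.
  by rewrite h /Ls /Us !big_geq // subrr lexx.
have := IH ltac:(apply/andP; split; lia).
have hb : (a <= b <= b.+1)%N by apply/andP; split; lia.
rewrite (LsD hb) (UsD hb).
rewrite /Ls /Us !big_nat1.
have := hf (inord b) (inord b.+1).
rewrite !inordK; try lia.
move=> /(_ erefl) /andP [h1 h2] /andP [h3 h4]; apply/andP; split; lra.
Qed.

Lemma bd_cons (f : 'I_N -> R) : bounded_derivative l u f ->
  forall x z : 'I_N, consv x (f x) z (f z).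
Proof.
move=> hf.
have H : forall x z : 'I_N, (x <= z)%N -> consv x (f x) z (f z).
  move=> x z hxz; rewrite /consv hxz.
  have := bd_seg hf (a:=x) (b:=z); rewrite !inord_val; apply.
  by rewrite hxz -ltnS ltn_ord.
move=> x z; case: (leqP x z) => h; first exact: H.
by rewrite consv_sym; apply: H; apply: ltnW.
Qed.

Fixpoint chk (zs : seq nat) (x : 'I_N) (fx : R) (c : tester R N) : tester R N :=
  match zs with
  | [::] => c
  | z :: zs => Query (inord z) (fun fz => if consv x fx z fz then chk zs x fx c else @Leaf R N false)
  end.

Fixpoint rounds (k : nat) : tester R N :=
  match k with
  | 0 => @Leaf R N true
  | k.+1 => Sample (fun x fx => chk (bpath N 0 N x) x fx (rounds k))
  end.

Definition good (f : 'I_N -> R) (x : 'I_N) : bool :=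
  all (fun z => consv x (f x) z (f (inord z))) (bpath N 0 N x).

Lemma acc_chk zs x fx c f p : acc_prob (chk zs x fx c) f p =
  if all (fun z => consv x fx z (f (inord z))) zs then acc_prob c f p else 0.
Proof.
elim: zs => [|z zs IH] //=.
by case: ifP => //=.
Qed.

Lemma acc_rounds k f p : acc_prob (rounds k) f p = (\sum_(x < N | good f x) p x) ^+ k.
Proof.
elim: k => [|k IH] /=; first by rewrite expr0.
rewrite exprS big_distrl /= [in RHS]big_mkcond /=.
apply: eq_bigr => x _; rewrite acc_chk IH /good.
by case: ifP; rewrite ?mulr0.
Qed.

Lemma ql_mono (T : tester R N) q q' : (q <= q')%N -> queries_le T q -> queries_le T q'.
Proof.
elim: T q q' => [b|k IH|x k IH|k IH] q q' hq //=.
- case: q hq => // q; case: q' => // q' hq H x y; exact: (IH x y q).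
- case: q hq => // q; case: q' => // q' hq H y; exact: (IH y q).
- move=> H b; exact: (IH b q).
Qed.

Lemma ql_chk zs x fx c q : queries_le c q -> queries_le (chk zs x fx c) (size zs + q).
Proof.
elim: zs => [|z zs IH] H //.
rewrite [size _]/= addSn /= => fz; case: ifP => _; first exact: IH.
done.
Qed.

Lemma ql_rounds k D : (forall x : 'I_N, size (bpath N 0 N x) <= D)%N ->
  queries_le (rounds k) (k * D.+1).
Proof.
move=> hD; elim: k => [|k IH] //.
rewrite mulSn addSn /= => x y.
apply: ql_mono (ql_chk _ x y IH).
by rewrite leq_add2r hD.
Qed.

Lemma good_cons f x y : good f x -> good f y -> consv x (f x) y (f y).
Proof.
wlog hxy : x y / (x <= y)%N.
  move=> W gx gy; case: (leqP x y) => h; first exact: W.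
  by rewrite consv_sym; apply: W => //; apply: ltnW.
move=> gx gy.
have := @bpath_lca N 0 N x y (leqnn _) (leq0n _) hxy (ltn_ord y).
case=> [/val_inj ->|[z /andP [hzx hzy] hz]]; first exact: consv_refl.
have c1 := allP gx z hzx.
have c2 := allP gy z hzy.
rewrite consv_sym in c2.
exact: consv_trans hz c1 c2.
Qed.

Definition hh (f : 'I_N -> R) (a : 'I_N) (i : nat) : R :=
  f a + (if (a <= i)%N then Ls a i else - Us i a).

Lemma hh_inc f (a : 'I_N) (i : nat) : (i.+1 < N)%N ->
  l i <= hh f a i.+1 - hh f a i <= u i.
Proof.
move=> hi; have hl := hlu hi.
rewrite /hh; case: (ltngtP a i.+1) => h.
- have h1 : (a <= i.+1)%N by apply: ltnW.
  have h2 : (a <= i)%N by rewrite -ltnS.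
  rewrite h2.
  have e : (a <= i <= i.+1)%N by rewrite h2 /=.
  rewrite (LsD e) /Ls big_nat1.
  apply/andP; split; lra.
- have h1 : (a <= i.+1)%N = false by apply/negbTE; rewrite -ltnNge.
  have h2 : (a <= i)%N = false by apply/negbTE; rewrite -ltnNge ltnW.
  rewrite h2.
  have e : (i <= i.+1 <= a)%N by rewrite leqnSn ltnW.
  rewrite (UsD e) /Us big_nat1.
  apply/andP; split; lra.
- rewrite h ltnn /Ls /Us big_geq // big_nat1.
  apply/andP; split; lra.
Qed.

Lemma extend (G : pred 'I_N) (f : 'I_N -> R) :
  (forall x y, G x -> G y -> consv x (f x) y (f y)) ->
  exists g, bounded_derivative l u g /\ (forall x, G x -> f x = g x).
Proof.
move=> hG.
case: (pickP G) => [a0 Ga0|G0]; last first.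
  exists (fun i : 'I_N => Ls 0 i); split; last by move=> x; rewrite G0.
  move=> i j hj; rewrite hj.
  have e : (0 <= i <= i.+1)%N by rewrite leqnSn.
  rewrite (LsD e) /Ls big_nat1.
  have := hlu (t:=i); rewrite -hj ltn_ord => /(_ isT) hl.
  apply/andP; split; lra.
pose g (i : 'I_N) := hh f [arg max_(a > a0 | G a) hh f a i]%O i.
exists g; split.
  move=> i j hj; rewrite /g.
  have hi : (i.+1 < N)%N by rewrite -hj ltn_ord.
  case: arg_maxP => // b Gb Hb.
  case: arg_maxP => // c Gc Hc.
  rewrite hj.
  have := hh_inc f b hi; have := hh_inc f c hi.
  have := Hb c Gc; have := Hc b Gb.
  rewrite hj.
  move=> h1 h2 /andP [h3 h4] /andP [h5 h6]; rewrite /= in h1 h2; apply/andP; split; lra.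
move=> x Gx; rewrite /g.
case: arg_maxP => // b Gb Hb.
have := Hb x Gx.
have : hh f b x <= f x.
  have := hG b x Gb Gx; rewrite /hh /consv.
  case: ifP => h; first by move=> /andP [h1 h2]; lra.
  by move=> /andP [h1 h2]; lra.
have -> : hh f x x = f x by rewrite /hh leqnn /Ls big_geq // addr0.
move=> h1 h2; rewrite /= in h2; lra.
Qed.

End Main.

Lemma bern (R : realFieldType) (e : R) k : 0 <= e -> 1 + k%:R * e <= (1 + e) ^+ k.
Proof.
move=> he; elim: k => [|k IH]; first by rewrite mul0r addr0 expr0.
rewrite exprS -natr1.
have h0 : 0 <= k%:R * e by apply: mulr_ge0.
have h1 : (1 + e) * (1 + k%:R * e) <= (1 + e) * (1 + e) ^+ k.
  by apply: ler_wpM2l => //; lra.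
nra.
Qed.

Lemma small_pow (R : realFieldType) (e s : R) k : 0 < e -> e < 1 -> 0 <= s -> s <= 1 - e ->
  2 < k%:R * e -> s ^+ k < 1/3.
Proof.
move=> h1 h2 h3 h4 h5.
have A : s ^+ k <= (1 - e) ^+ k by apply: lerXn2r; rewrite ?nnegrE //; lra.
have B := bern k (ltW h1).
have C : ((1 - e) * (1 + e)) ^+ k <= 1 by apply: exprn_ile1; nra.
rewrite exprMn in C.
have D : 0 <= (1 - e) ^+ k by apply: exprn_ge0; lra.
have E : 0 <= s ^+ k by apply: exprn_ge0.
nra.
Qed.

Lemma dist_le (R : realType) N (p f g : 'I_N -> R) (G : pred 'I_N) :
  (forall x, 0 <= p x) -> (forall x, G x -> f x = g x) ->
  dist_D p f g <= \sum_(x < N | ~~ G x) p x.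
Proof.
move=> hp hG.
have -> : dist_D p f g = \sum_(x < N | f x != g x) p x by [].
rewrite [X in _ <= X]big_mkcond [X in X <= _]big_mkcond /=.
apply: ler_sum => x _.
case: (boolP (G x)) => h /=; last by case: ifP.
by rewrite hG // eqxx.
Qed.

Lemma sum_le1 (R : realType) N (p : 'I_N -> R) (P : pred 'I_N) :
  is_distribution p -> \sum_(x < N | P x) p x <= 1.
Proof.
move=> [hp h1]; rewrite -h1 [X in _ <= X](bigID P) /= lerDl.
by apply: sumr_ge0.
Qed.

Unset Implicit Arguments.
Set Strict Implicit.

Theorem theorem4p4 (R : realType) (n : nat) (eps : R) (l u : nat -> R) :
  0 < eps -> (0 < n)%N ->
  (forall t : nat, (t.+1 < n)%N -> l t < u t) ->
  exists (T : tester R n) (q : nat),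
    (q%:R <= 24 / eps * (ln (n%:R : R) / ln 2)) /\
    queries_le T q /\
    df_tester (bounded_derivative l u) eps T.
Proof.
move=> he; case: n => // n _ hlu.
have ln2 : 0 < ln (2 : R) by apply: ln_gt0; lra.
have lnN : ln (2 : R) <= ln (n.+1%:R : R) \/ n = 0%N.
  case: n {hlu} => [|n]; [by right | left].
  by rewrite ler_ln ?posrE // ?ler_nat //; lra.
have lnN0 : 0 <= ln (n.+1%:R : R) by apply: ln_ge0; rewrite ler1n.
case: (boolP ((n == 0%N) || (1 <= eps))) => hcase.
  exists (@Leaf R n.+1 true), 0%N; split.
    by apply: mulr_ge0; apply: divr_ge0; lra.
  split => // p hp f; split => [_ /=|H]; first lra.
  exfalso; case/orP: hcase => [/eqP n0|e1].
    subst n.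
    have hf : bounded_derivative l u f.
      by move=> i j; have := ltn_ord i; have := ltn_ord j; lia.
    have := H f hf.
    have -> : dist_D p f f = \sum_(x < 1 | f x != f x) p x by [].
    rewrite big_pred0 => [|x]; last by rewrite eqxx.
    lra.
  have [g [Pg _]] := extend hlu (G := pred0) (f := f) (fun x y h _ => ltac:(by [])).
  have := H g Pg.
  have := dist_le (G := pred0) (g := g) (f := f) hp.1 (fun x h => ltac:(by [])).
  have := @sum_le1 R _ p (fun x => ~~ pred0 x) hp; lra.
rewrite negb_or -ltNge in hcase; case/andP: hcase => hn1 e1.
have {}lnN : ln (2 : R) <= ln (n.+1%:R : R) by case: lnN => // /eqP; rewrite (negbTE hn1).
pose k := (Num.truncn (2 / eps)).+1.
pose D := trunc_log 2 (2 * n.+1).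
have hD : forall x : 'I_n.+1, (size (bpath n.+1 0 n.+1 x) <= D)%N.
  move=> x; apply: trunc_log_max => //.
  apply: leq_trans (bpath_size n.+1 x (ltn0Sn n)) _; rewrite subn0 /=; lia.
have hD2 : (2 ^ D <= 2 * n.+1)%N by apply: trunc_logP.
exists (rounds n l u k), (k * D.+1)%N; split; last split.
- have hk : k%:R <= 2 / eps + 1.
    rewrite /k -natr1 lerD2r truncn_le; apply: divr_ge0; lra.
  have hDl : D%:R * ln (2:R) <= ln 2 + ln (n.+1%:R : R).
    have e2 : ln ((2:R) ^+ D) = D%:R * ln 2 by rewrite lnXn ?mulr_natl //; lra.
    rewrite -e2 -lnM ?posrE //.
    rewrite (@ler_ln R ((2:R)^+D) (2 * n.+1%:R)) ?posrE; first last.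
    + by apply: mulr_gt0 => //; lra.
    + by apply: exprn_gt0; lra.
    have : ((2 ^ D)%:R : R) <= (2 * n.+1)%:R by rewrite ler_nat.
    by rewrite natrX natrM.
  set X := ln (n.+1%:R : R) / ln 2.
  have eX : X * ln 2 = ln (n.+1%:R : R) by rewrite /X divfK //; lra.
  set iv := eps^-1.
  have ei : eps * iv = 1 by rewrite /iv mulfV //; lra.
  have hX1 : 1 <= X by nra.
  have hDX : D%:R <= 1 + X by nra.
  have hiv : 1 <= iv by nra.
  rewrite natrM -natr1 /iv !mulrA -/iv.
  have hk3 : k%:R <= 3 * iv by rewrite /iv; move: hk; rewrite mulrC -/iv; nra.
  have h0 : 0 <= (D%:R : R) by [].
  have hk0 : 0 <= (k%:R : R) by [].
  rewrite -mulrA -/X.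
  have hD3 : D%:R + 1 <= 3 * X by lra.
  have : k%:R * (D%:R + 1) <= (3 * iv) * (3 * X) by apply: ler_pM => //; lra.
  nra.
- exact: ql_rounds.
- move=> p hp f; rewrite acc_rounds; split.
    move=> Pf.
    have hg : forall x, good l u f x.
      move=> x; apply/allP => z hz.
      have /andP [_ hzN] := bpath_in hz.
      have := bd_cons Pf x (inord z); rewrite inordK //.
    have -> : \sum_(x < n.+1 | good l u f x) p x = \sum_(x < n.+1) p x by apply: eq_bigl.
    rewrite hp.2 expr1n; lra.
  move=> H.
  have [g [Pg Hg]] := extend hlu (@good_cons R n l u f).
  have d1 := dist_le hp.1 Hg.
  have d2 := H g Pg.
  have e := hp.2; rewrite (bigID (good l u f)) /= in e.
  have s0 : 0 <= \sum_(x < n.+1 | good l u f x) p x by apply: sumr_ge0 => x _; exact: hp.1.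
  have hk2 : 2 < k%:R * eps.
    have := truncnS_gt (2 / eps); rewrite -/k => h.
    have : 2 / eps * eps = 2 by rewrite divfK //; lra.
    nra.
  have := @small_pow R eps _ k he e1 s0 _ hk2.
  move=> /(_ ltac:(lra)); lra.
Qed.
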